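(* Consider an insertion-only edge stream and the reservoir sample $\mathcal{S}$ of capacity $M\ge 6$ (as described in the context). Let $\lambda=\{\ell_1,\ell_2,\ell_3\}$ and $\gamma=\{g_1,g_2,g_3\}$ be two triangles sharing no edge, where the edges of each are numbered in their order of arrival on the stream, and assume the last edge of $\lambda$ arrives on the stream before the last edge of $\gamma$, i.e. $t_\lambda<t_\gamma$. Let $D_\lambda$ be the event that $\ell_1$ and $\ell_2$ are both in $\mathcal{S}$ at the end of time step $t_\lambda-1$, and $D_\gamma$ the event that $g_1$ and $g_2$ are both in $\mathcal{S}$ at the end of time step $t_\gamma-1$. Then \[ \Pr(D_\gamma\mid D_\lambda)\le\Pr(D_\gamma). \]
   Context: An insertion-only edge stream: at each time step $t=1,2,\dots$ an edge $e_t$ between two distinct vertices arrives, which is not already present. A triangle is a set of three edges $\{\{u,v\},\{v,w\},\{w,u\}\}$ with $u,v,w$ distinct. For a triangle $\lambda$, $t_\lambda$ is the time step at which its last edge arrives. Reservoir sampling with capacity $M$: the sample $\mathcal{S}$ starts empty; at time $t$, if $t\le M$ the edge $e_t$ is inserted; if $t>M$, with probability $M/t$ an edge chosen uniformly at random from $\mathcal{S}$ is removed and $e_t$ is inserted, otherwise $\mathcal{S}$ is unchanged. *)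

(* Defs.v *)
(* Reservoir sampling over an insertion-only edge stream,
   modelled as an explicit finite discrete probability distribution (with
   rational weights) over the trajectories S_0, S_1, ..., S_T of the sample. *)
From mathcomp Require Import all_boot all_order all_algebra.
Set Implicit Arguments. Unset Strict Implicit. Unset Printing Implicit Defensive.
Import GRing.Theory Num.Theory.
Local Open Scope ring_scope.

(* An edge is a 2-element vertex set; the stream is a list of edges,
   e_t = nth set0 str (t-1) for t = 1 .. size str. *)
Definition sedge (V : finType) (str : seq {set V}) (t : nat) : {set V} :=
  nth set0 str t.-1.

Definition valid_stream (V : finType) (str : seq {set V}) : Prop :=
  uniq str /\ all (fun e : {set V} => #|e| == 2%N) str.

(* the edges arriving at times i < j < k form a triangle (so they are
   numbered l1, l2, l3 in order of arrival, and t_lambda = k) *)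
Definition is_triangle (V : finType) (str : seq {set V}) (i j k : nat) : Prop :=
  [/\ (0 < i)%N, (i < j)%N, (j < k)%N, (k <= size str)%N &
   exists u v w : V, [/\ u != v, v != w, w != u &
     [set sedge str i; sedge str j; sedge str k] =
     [set [set u; v]; [set v; w]; [set w; u]]]].

Definition tri_edges (V : finType) (str : seq {set V}) (i j k : nat) : {set {set V}} :=
  [set sedge str i; sedge str j; sedge str k].

Definition rstep (V : finType) (M t : nat) (e : {set V}) (S : seq {set V})
  : seq (seq {set V} * rat) :=
  if (t <= M)%N then [:: (e :: S, 1)]
  else (S, 1 - M%:R / t%:R) ::
       [seq (e :: rem x S, M%:R / t%:R * (size S)%:R^-1) | x <- S].

(* Distribution over trajectories [:: S_0; ...; S_n] (S_0 empty),
   S_t = sample at the end of time step t. *)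
Fixpoint rpaths (V : finType) (M : nat) (str : seq {set V}) (n : nat)
  : seq (seq (seq {set V}) * rat) :=
  match n with
  | 0 => [:: ([:: [::]], 1)]
  | n'.+1 =>
    flatten [seq [seq (rcons p.1 q.1, p.2 * q.2)
                 | q <- rstep M n (sedge str n) (last [::] p.1)]
            | p <- rpaths M str n']
  end.

Definition Pr (V : finType) (M : nat) (str : seq {set V})
  (E : seq (seq {set V}) -> bool) : rat :=
  \sum_(p <- rpaths M str (size str)) (E p.1)%:R * p.2.

Definition sample_at (V : finType) (P : seq (seq {set V})) (t : nat) : seq {set V} :=
  nth [::] P t.

Definition Pr_cond (V : finType) (M : nat) (str : seq {set V})
  (A B : seq (seq {set V}) -> bool) : rat :=
  Pr M str (fun P => A P && B P) / Pr M str B.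

Definition D_event (V : finType) (str : seq {set V}) (i j k : nat)
  (P : seq (seq {set V})) : bool :=
  (sedge str i \in sample_at P k.-1) && (sedge str j \in sample_at P k.-1).

(* Main.v *)
Require Import Defs.
From mathcomp Require Import all_boot all_order all_algebra.
From mathcomp Require Import zify ring lra.
Import GRing.Theory Num.Theory.
Local Open Scope ring_scope.
Set Implicit Arguments. Unset Strict Implicit. Unset Printing Implicit Defensive.

Definition E (V : finType) (M : nat) (str : seq {set V}) (n : nat)
  (h : seq (seq {set V}) -> rat) : rat :=
  \sum_(p <- rpaths M str n) h p.1 * p.2.

Definition inv_ok (V : finType) (M : nat) (str : seq {set V}) (n : nat)
  (p : seq (seq {set V}) * rat) : Prop :=
  [/\ size p.1 = n.+1, 0 <= p.2, uniq (last [::] p.1),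
      size (last [::] p.1) = minn n M &
      {subset last [::] p.1 <= take n str}].

Lemma rpaths_inv (V : finType) (M : nat) (str : seq {set V}) n :
  (0 < M)%N -> uniq str -> (n <= size str)%N ->
  forall p, p \in rpaths M str n -> inv_ok M str n p.
Proof.
move=> M0 ustr; elim: n => [|n IH] Hn p.
  rewrite /= inE => /eqP -> /=; split => //.
  by rewrite min0n.
move=> /flattenP [r /mapP [p0 Hp0 ->] /mapP [q Hq ->]] /=.
have [Hs Hw Hu Hsz Hsub] := IH (ltnW Hn) p0 Hp0.
set S := last [::] p0.1 in Hu Hsz Hsub Hq.
have Htk : take n.+1 str = rcons (take n str) (sedge str n.+1) by rewrite (take_nth set0 Hn).
have eS : sedge str n.+1 \notin S.
  apply/negP => /Hsub H'.
  move: (ustr); rewrite -{1}(cat_take_drop n.+1 str) Htk cat_uniq rcons_uniq.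
  by rewrite H'.
rewrite /inv_ok /= size_rcons last_rcons Hs.
move: Hq; rewrite /rstep; case: ifP => HM.
  rewrite inE => /eqP -> /=; split => //.
  - by rewrite mulr1.
  - by rewrite eS.
  - rewrite Hsz; lia.
  - move=> x; rewrite inE Htk mem_rcons inE => /orP [->//|/Hsub ->]; by rewrite orbT.
rewrite inE => /orP [/eqP -> /=|/mapP [x Hx ->] /=]; split => //.
  - apply: mulr_ge0 => //; rewrite subr_ge0 ler_pdivrMr ?ltr0n // mul1r ler_nat; lia.
  - rewrite Hsz; lia.
  - move=> y /Hsub; rewrite Htk mem_rcons inE => ->; by rewrite orbT.
  - apply: mulr_ge0 => //; apply: mulr_ge0; first by apply: divr_ge0.
    by rewrite invr_ge0.
  - rewrite rem_uniq // andbT; apply/negP => /mem_rem H; by rewrite H in eS.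
  - rewrite size_rem // Hsz; lia.
  - move=> y; rewrite inE Htk mem_rcons inE => /orP [->//|/mem_rem /Hsub ->]; by rewrite orbT.
Qed.
Definition zsub (V : finType) (Z : {set {set V}}) (S : seq {set V}) : bool :=
  [forall z in Z, z \in S].

Lemma zsubP (V : finType) (Z : {set {set V}}) S :
  reflect {in Z, forall z, z \in S} (zsub Z S).
Proof. exact: forall_inP. Qed.

Lemma zsub_cons (V : finType) (Z : {set {set V}}) e S :
  zsub Z (e :: S) = zsub (Z :\ e) S.
Proof.
apply/zsubP/zsubP => H z.
  rewrite !inE => /andP [ne /H]; rewrite inE => /orP [/eqP E|//]; by rewrite E eqxx in ne.
move=> Hz; rewrite inE; case: (eqVneq z e) => //= ne; apply: H; by rewrite !inE ne.
Qed.

Lemma zsub_rem (V : finType) (Z : {set {set V}}) x S :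
  uniq S -> zsub Z (rem x S) = zsub Z S && (x \notin Z).
Proof.
move=> uS; apply/zsubP/andP => [H|[/zsubP H xZ] z zZ].
  split; first by apply/zsubP => z /H /mem_rem.
  by apply/negP => /H; rewrite mem_rem_uniqF.
rewrite (mem_rem_uniq _ uS) inE (H z zZ) andbT; apply/negP => /eqP E.
by rewrite -E zZ in xZ.
Qed.

Lemma zsub_count (V : finType) (Z : {set {set V}}) S :
  uniq S -> zsub Z S -> count (fun x => x \notin Z) S = (size S - #|Z|)%N /\ (#|Z| <= size S)%N.
Proof.
move=> uS /zsubP H.
have E1 : count (fun x => x \in Z) S = #|Z|.
  rewrite -size_filter cardE; apply: perm_size; apply: uniq_perm.
  - exact: filter_uniq.
  - exact: enum_uniq.
  move=> x; rewrite mem_filter mem_enum; apply/andP/idP => [[]//|xZ]; split => //; exact: H.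
have := count_predC (fun x => x \in Z) S; rewrite E1 => <-.
split; [|lia]. rewrite addKn. by [].
Qed.

Lemma zsub_sub (V : finType) (Z Z' : {set {set V}}) S :
  Z' \subset Z -> zsub Z S -> zsub Z' S.
Proof. move=> /subsetP HZ /zsubP H; apply/zsubP => z /HZ; exact: H. Qed.

Lemma sum_count (T : Type) (s : seq T) (P : pred T) (c : rat) :
  \sum_(i <- s) (P i)%:R * c = (count P s)%:R * c.
Proof.
elim: s => [|x s IH]; first by rewrite big_nil mul0r.
by rewrite big_cons IH /= natrD mulrDl.
Qed.

Definition cst (M n : nat) (b : bool) (k : nat) : rat :=
  if (n <= M)%N then 1 else if b then (M - k)%:R / n%:R else (n - k)%:R / n%:R.

Lemma cst_ge0 M n b k : 0 <= cst M n b k.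
Proof. rewrite /cst; case: ifP => //; case: b => _; apply: divr_ge0; by rewrite ler0n. Qed.

Lemma step_zsub (V : finType) (M n : nat) (e : {set V}) S (Z : {set {set V}}) :
  (0 < M)%N -> (0 < n)%N -> uniq S -> e \notin S -> ((M < n)%N -> size S = M) ->
  \sum_(q <- rstep M n e S) (zsub Z q.1)%:R * q.2 =
  cst M n (e \in Z) #|Z :\ e| * (zsub (Z :\ e) S)%:R.
Proof.
move=> M0' n0 uS eS HS; rewrite /rstep /cst; case: ifP => HM.
  by rewrite big_cons big_nil /= zsub_cons !mulr1 addr0 mul1r.
have HMn : (M < n)%N by rewrite ltnNge HM.
have SM := HS HMn.
rewrite big_cons big_map /=.
under eq_bigr => x _ do rewrite /= zsub_cons zsub_rem //.
rewrite sum_count.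
set w := M%:R / n%:R.
have nz : n%:R != 0 :> rat by rewrite pnatr_eq0 -lt0n.
case Z'S: (zsub (Z :\ e) S); last first.
  have -> : zsub Z S = false.
    apply/negP => /(zsub_sub (subsetDl Z [set e])); by rewrite Z'S.
  under eq_count => x do rewrite andFb.

  rewrite count_pred0 /= mulr0n !mul0r addr0 mulr0 //.
under eq_count => x do rewrite andTb.
have [Ec Hk] := zsub_count uS Z'S.
rewrite Ec /w SM mulr1.
have M0 : M%:R != 0 :> rat.
  by rewrite pnatr_eq0 -lt0n.
case eZ: (e \in Z).
  have -> : zsub Z S = false.
    apply/negP => /zsubP /(_ e eZ) eS'; by rewrite eS' in eS.
  rewrite mul0r add0r -mulr_natr; field. by rewrite nz M0.
have ZZ : Z :\ e = Z.
  apply/setP => z; rewrite !inE; case: (eqVneq z e) => [->|//]; by rewrite eZ.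
rewrite ZZ in Z'S Hk *; rewrite Z'S mul1r -mulr_natr natrB //.
have Hkn : (#|Z| <= n)%N by rewrite SM in Hk; lia.
rewrite (natrB _ Hkn) !mul1r. field. by rewrite nz M0.
by rewrite -SM.
Qed.

Lemma E_succ (V : finType) M (str : seq {set V}) n h :
  E M str n.+1 h = E M str n (fun P =>
    \sum_(q <- rstep M n.+1 (sedge str n.+1) (last [::] P)) h (rcons P q.1) * q.2).
Proof.
rewrite /E /= big_flatten /= big_map; apply: eq_bigr => p _.
rewrite big_map mulr_suml; apply: eq_bigr => q _ /=; ring.
Qed.

Lemma E_step (V : finType) M (str : seq {set V}) n (h : seq (seq {set V}) -> rat)
   (g : seq {set V} -> rat) :
  (0 < M)%N -> uniq str -> (n < size str)%N ->
  (forall P x, size P = n.+1 -> h (rcons P x) = h P) ->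
  E M str n.+1 (fun P => h P * g (nth [::] P n.+1)) =
  E M str n (fun P => h P * \sum_(q <- rstep M n.+1 (sedge str n.+1) (nth [::] P n)) g q.1 * q.2).
Proof.
move=> M0 us Hn Hh; rewrite E_succ /E; apply: eq_big_seq => p Hp.
have [Hs _ _ _ _] := rpaths_inv M0 us (ltnW Hn) Hp.
have -> : nth [::] p.1 n = last [::] p.1.
  by rewrite -nth_last Hs.
congr (_ * _); rewrite mulr_sumr; apply: eq_bigr => q _.
by rewrite Hh // nth_rcons Hs ltnn eqxx mulrA.
Qed.

Lemma E_zsub (V : finType) M (str : seq {set V}) n (h : seq (seq {set V}) -> rat)
   (Z : {set {set V}}) :
  (0 < M)%N -> uniq str -> (n < size str)%N ->
  (forall P x, size P = n.+1 -> h (rcons P x) = h P) ->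
  E M str n.+1 (fun P => h P * (zsub Z (nth [::] P n.+1))%:R) =
  cst M n.+1 (sedge str n.+1 \in Z) #|Z :\ sedge str n.+1| *
  E M str n (fun P => h P * (zsub (Z :\ sedge str n.+1) (nth [::] P n))%:R).
Proof.
move=> M0 us Hn Hh; rewrite (E_step (fun S : seq {set V} => (zsub Z S)%:R)) // /E mulr_sumr; apply: eq_big_seq => p Hp.
have [Hs _ Hu Hsz Hsub] := rpaths_inv M0 us (ltnW Hn) Hp.
have El : nth [::] p.1 n = last [::] p.1 by rewrite -nth_last Hs.
rewrite El step_zsub //.
- ring.
- have Htk : take n.+1 str = rcons (take n str) (sedge str n.+1) by rewrite (take_nth set0 Hn).
  apply/negP => /Hsub H'.
  move: (us); rewrite -{1}(cat_take_drop n.+1 str) Htk cat_uniq rcons_uniq.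
  by rewrite H'.
- move=> HM; rewrite Hsz; lia.
Qed.

Lemma zsub0 (V : finType) (S : seq {set V}) : zsub set0 S.
Proof. by apply/zsubP => z; rewrite inE. Qed.

Lemma E_ext (V : finType) M (str : seq {set V}) n (h : seq (seq {set V}) -> rat) :
  (0 < M)%N -> uniq str -> (n < size str)%N ->
  (forall P x, size P = n.+1 -> h (rcons P x) = h P) ->
  E M str n.+1 h = E M str n h.
Proof.
move=> M0 us Hn Hh.
have := E_zsub set0 M0 us Hn Hh.
rewrite /E. under eq_bigr => p _ do rewrite zsub0 mulr1.
move=> ->.
have -> : set0 :\ sedge str n.+1 = set0 by apply/setP => z; rewrite !inE andbF.
rewrite inE cards0 /cst; case: ifP => _.
  by rewrite mul1r; apply: eq_bigr => p _; rewrite zsub0 mulr1.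
rewrite subn0 divff ?pnatr_eq0 // mul1r; apply: eq_bigr => p _; by rewrite zsub0 mulr1.
Qed.

Lemma E_ext_many (V : finType) M (str : seq {set V}) k m (h : seq (seq {set V}) -> rat) :
  (0 < M)%N -> uniq str -> (k <= m)%N -> (m <= size str)%N ->
  (forall P x, (k < size P)%N -> h (rcons P x) = h P) ->
  E M str m h = E M str k h.
Proof.
move=> M0 us Hkm Hm Hh; elim: m Hkm Hm => [|m IH] Hkm Hm.
  by move: Hkm; rewrite leqn0 => /eqP ->.
case: (leqP k m) => Hk.
  rewrite E_ext //; first exact: IH (ltnW Hm).
  move=> P x HP; apply: Hh; rewrite HP; lia.
by have -> : k = m.+1 by lia.
Qed.

Lemma E_ge0 (V : finType) M (str : seq {set V}) n (h : seq (seq {set V}) -> rat) :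
  (0 < M)%N -> uniq str -> (n <= size str)%N -> (forall P, 0 <= h P) ->
  0 <= E M str n h.
Proof.
move=> M0 us Hn Hh; rewrite /E big_seq; apply: sumr_ge0 => p Hp.
have [_ Hw _ _ _] := rpaths_inv M0 us Hn Hp.
exact: mulr_ge0.
Qed.
Lemma frac_le (a b c n : nat) : (0 < n)%N -> (a * n <= b * c)%N ->
  a%:R / n%:R <= b%:R / n%:R * (c%:R / n%:R) :> rat.
Proof.
move=> n0 H.
have np : 0 < n%:R :> rat by rewrite ltr0n.
have -> : b%:R / n%:R * (c%:R / n%:R) = (b * c)%:R / n%:R / n%:R :> rat.
  rewrite natrM; field; by rewrite lt0r_neq0.
rewrite ler_pdivlMr // ler_pdivlMr // mulrAC divfK ?lt0r_neq0 // -natrM ler_nat //.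
Qed.

Lemma cst_ineq1 M n x y : (0 < n)%N ->
  cst M n false (x + y) <= cst M n false x * cst M n false y.
Proof.
move=> n0; rewrite /cst; case: ifP => _; first by rewrite mul1r.
apply: frac_le => //; nia.
Qed.

Lemma cst_ineq2 M n x y : (0 < n)%N ->
  cst M n true (x + y) <= cst M n true x * cst M n false y.
Proof.
move=> n0; rewrite /cst; case: ifP => HM; first by rewrite mul1r.
apply: frac_le => //; nia.
Qed.

Lemma key_ineq (pXY pX pY cXY cX cY : rat) :
  0 <= pX -> 0 <= pY -> 0 <= cXY -> cXY <= cX * cY -> pXY <= pX * pY ->
  cXY * pXY <= (cX * pX) * (cY * pY).
Proof.
move=> hX hY hc hcc hp.
apply: (Order.le_trans (ler_wpM2l hc hp)).
rewrite mulrACA; apply: ler_wpM2r => //; exact: mulr_ge0.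
Qed.

Lemma zsubU (V : finType) (X Y : {set {set V}}) S :
  zsub (X :|: Y) S = zsub X S && zsub Y S.
Proof.
apply/zsubP/andP => [H|[/zsubP HX /zsubP HY] z].
  by split; apply/zsubP => z Hz; apply: H; rewrite inE Hz ?orbT.
by rewrite inE => /orP [/HX|/HY].
Qed.

Lemma card_disjD (V : finType) (X Y : {set {set V}}) e :
  [disjoint X & Y] -> #|(X :|: Y) :\ e| = (#|X :\ e| + #|Y :\ e|)%N.
Proof.
move=> d; rewrite setDUl cardsU.
have -> : (X :\ e) :&: (Y :\ e) = set0.
  apply: disjoint_setI0; exact: (@disjointW _ _ _ _ _ (subsetDl _ _) (subsetDl _ _) d).
by rewrite cards0 subn0.
Qed.

Lemma disjD (V : finType) (X Y : {set {set V}}) e :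
  [disjoint X & Y] -> [disjoint X :\ e & Y :\ e].
Proof. move=> d; exact: (@disjointW _ _ _ _ _ (subsetDl _ _) (subsetDl _ _) d). Qed.

Lemma same_time (V : finType) M (str : seq {set V}) t (X Y : {set {set V}}) :
  (0 < M)%N -> uniq str -> (t <= size str)%N -> [disjoint X & Y] ->
  E M str t (fun P => 1 * (zsub (X :|: Y) (nth [::] P t))%:R) <=
  E M str t (fun P => 1 * (zsub X (nth [::] P t))%:R) *
  E M str t (fun P => 1 * (zsub Y (nth [::] P t))%:R).
Proof.
move=> M0 us; elim: t X Y => [|t IH] X Y Ht d.
  rewrite /E /= !big_cons !big_nil /= !addr0 !mulr1 !mul1r zsubU.
  by case: (zsub X [::]); case: (zsub Y [::]).
have Hh : forall (P : seq (seq {set V})) x, size P = t.+1 -> (fun _ => 1 : rat) (rcons P x) = 1 by [].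
rewrite !(E_zsub _ M0 us Ht Hh).
set e := sedge str t.+1.
have IH' := IH (X :\ e) (Y :\ e) (ltnW Ht) (disjD e d).
rewrite card_disjD // setDUl.
have E0 : forall Z : {set {set V}}, 0 <= E M str t (fun P => 1 * (zsub Z (nth [::] P t))%:R).
  move=> Z; apply: E_ge0 => //; [exact: ltnW | move=> P; by rewrite mul1r ler0n].
rewrite inE.
case eX: (e \in X); case eY: (e \in Y) => /=.
- by move: (disjointFl d eY); rewrite eX.
- apply: key_ineq => //; [exact: cst_ge0 | exact: cst_ineq2].
- apply: key_ineq => //; first exact: cst_ge0.
  by rewrite mulrC addnC; apply: cst_ineq2.
- apply: key_ineq => //; [exact: cst_ge0 | exact: cst_ineq1].
Qed.

Lemma base_corr (V : finType) M (str : seq {set V}) a (L Y : {set {set V}}) :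
  (0 < M)%N -> uniq str -> (a <= size str)%N -> [disjoint L & Y] ->
  E M str a (fun P => (zsub L (nth [::] P a))%:R * (zsub Y (nth [::] P a))%:R) <=
  E M str a (fun P => (zsub L (nth [::] P a))%:R) *
  E M str a (fun P => 1 * (zsub Y (nth [::] P a))%:R).
Proof.
move=> M0 us Ha d.
have := same_time M0 us Ha d.
have -> : E M str a (fun P => 1 * (zsub (L :|: Y) (nth [::] P a))%:R) =
  E M str a (fun P => (zsub L (nth [::] P a))%:R * (zsub Y (nth [::] P a))%:R).
  apply: eq_bigr => p _; rewrite zsubU mul1r; by case: (zsub L _); case: (zsub Y _); rewrite ?mul1r ?mul0r.
have -> // : E M str a (fun P => 1 * (zsub L (nth [::] P a))%:R) =
  E M str a (fun P => (zsub L (nth [::] P a))%:R).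
by apply: eq_bigr => p _; rewrite mul1r.
Qed.

Lemma main_corr (V : finType) M (str : seq {set V}) a t (L Y : {set {set V}}) :
  (0 < M)%N -> uniq str -> (a <= t)%N -> (t <= size str)%N -> [disjoint L & Y] ->
  E M str t (fun P => (zsub L (nth [::] P a))%:R * (zsub Y (nth [::] P t))%:R) <=
  E M str t (fun P => (zsub L (nth [::] P a))%:R) *
  E M str t (fun P => 1 * (zsub Y (nth [::] P t))%:R).
Proof.
move=> M0 us; elim: t Y => [|t IH] Y Hat Ht d.
  move: Hat; rewrite leqn0 => /eqP ->; exact: base_corr.
case: (eqVneq a t.+1) => [->|ne]; first exact: base_corr.
have Hat' : (a <= t)%N by lia.
have Hh : forall (P : seq (seq {set V})) x, size P = t.+1 ->
   (fun P => (zsub L (nth [::] P a))%:R : rat) (rcons P x) = (zsub L (nth [::] P a))%:R.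
  by move=> P x HP /=; rewrite nth_rcons HP ltnS Hat'.
have Hh1 : forall (P : seq (seq {set V})) x, size P = t.+1 -> (fun _ => 1 : rat) (rcons P x) = 1 by [].
rewrite (E_zsub _ M0 us Ht Hh) (E_zsub _ M0 us Ht Hh1) (E_ext M0 us Ht Hh).
rewrite mulrCA; apply: ler_wpM2l; first exact: cst_ge0.
apply: IH => //; first exact: ltnW.
exact: (@disjointW _ _ _ _ _ (subxx _) (subsetDl _ _) d).
Qed.

Lemma zsub2 (V : finType) (x y : {set V}) S : zsub [set x; y] S = (x \in S) && (y \in S).
Proof.
apply/zsubP/andP => [H|[hx hy] z]; first by split; apply: H; rewrite !inE eqxx ?orbT.
by rewrite !inE => /orP [/eqP ->|/eqP ->].
Qed.

Theorem lemma4p14 (V : finType) (M : nat) (str : seq {set V})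
  (l1 l2 l3 g1 g2 g3 : nat) :
  (6 <= M)%N ->
  valid_stream str ->
  is_triangle str l1 l2 l3 ->
  is_triangle str g1 g2 g3 ->
  [disjoint tri_edges str l1 l2 l3 & tri_edges str g1 g2 g3] ->
  (l3 < g3)%N ->
  Pr_cond M str (D_event str g1 g2 g3) (D_event str l1 l2 l3)
    <= Pr M str (D_event str g1 g2 g3).
Proof.
move=> M6 [us _] [hl1 hl2 hl3 hl4 _] [hg1 hg2 hg3 hg4 _] dis hlg.
have M0 : (0 < M)%N by lia.
set a := l3.-1; set b := g3.-1.
set L := [set sedge str l1; sedge str l2].
set Y := [set sedge str g1; sedge str g2].
have dLY : [disjoint L & Y].
  apply: (@disjointW _ _ _ _ _ _ _ dis); apply/subsetP => z; rewrite !inE /tri_edges;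
  by move=> /orP [->|->]; rewrite ?orbT.
have Hab : (a <= b)%N by rewrite /a /b; lia.
have Hb : (b <= size str)%N by rewrite /b; lia.
have PrE : forall Ev, Pr M str Ev = E M str (size str) (fun P => (Ev P)%:R) by [].
have stab : forall k (P : seq (seq {set V})) x, (b < size P)%N -> (k <= b)%N ->
   nth [::] (rcons P x) k = nth [::] P k.
  move=> k P x HP Hk; rewrite nth_rcons; case: ifP => //; lia.
have E1 : Pr M str (fun P => D_event str g1 g2 g3 P && D_event str l1 l2 l3 P) =
   E M str b (fun P => (zsub L (nth [::] P a))%:R * (zsub Y (nth [::] P b))%:R).
  rewrite PrE (E_ext_many (k := b)) //.
    apply: eq_bigr => p _; rewrite /D_event /sample_at -!zsub2 -/a -/b.
    by case: (zsub L _); case: (zsub Y _); rewrite ?mul1r ?mul0r.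
  move=> P x HP; rewrite /D_event /sample_at !stab //.
have E2 : Pr M str (D_event str l1 l2 l3) = E M str b (fun P => (zsub L (nth [::] P a))%:R).
  rewrite PrE (E_ext_many (k := b)) //.
    by apply: eq_bigr => p _; rewrite /D_event /sample_at -!zsub2.
  move=> P x HP; rewrite /D_event /sample_at !stab //.
have E3 : Pr M str (D_event str g1 g2 g3) = E M str b (fun P => 1 * (zsub Y (nth [::] P b))%:R).
  rewrite PrE (E_ext_many (k := b)) //.
    by apply: eq_bigr => p _; rewrite /D_event /sample_at -!zsub2 mul1r.
  move=> P x HP; rewrite /D_event /sample_at !stab //.
have Hm := main_corr M0 us Hab Hb dLY.
have G3 : 0 <= Pr M str (D_event str g1 g2 g3).
  rewrite PrE; apply: E_ge0 => // P; exact: ler0n.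
have G2 : 0 <= Pr M str (D_event str l1 l2 l3).
  rewrite PrE; apply: E_ge0 => // P; exact: ler0n.
rewrite /Pr_cond.
case: (eqVneq (Pr M str (D_event str l1 l2 l3)) 0) => [->|nz].
  by rewrite invr0 mulr0.
have pos : 0 < Pr M str (D_event str l1 l2 l3) by rewrite lt0r nz.
rewrite ler_pdivrMr // E1 E2 E3 mulrC; exact: Hm.
Qed.
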